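(* Let $X,Y,Z,W$ be real-valued random variables on an atomless probability space (no integrability assumed). If $X\le_{\rm cx}Z$ and $Y\le_{\rm cx}W$, then $$X+Y\le_{\rm cx} Z^{\rm co}+W^{\rm co},$$ where $(Z^{\rm co},W^{\rm co})$ is a comonotonic version of $(Z,W)$.
   Context: An expectation $\mathbb E[V]$ is well-defined if $\mathbb E[\max\{V,0\}]<\infty$ or $\mathbb E[\max\{-V,0\}]<\infty$. We write $U\le_{\rm cx}V$ if $\mathbb E[u(U)]\le\mathbb E[u(V)]$ for all convex $u:\mathbb R\to\mathbb R$ such that both expectations are well-defined. A pair $(Z',W')$ is comonotonic if $Z'=f(S)$, $W'=g(S)$ a.s. for some random variable $S$ and increasing functions $f,g$; a comonotonic version of $(Z,W)$ is a comonotonic pair $(Z',W')$ with $Z'$ distributed as $Z$ and $W'$ distributed as $W$. *)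

(* Defs.v *)
From HB Require Import structures.
From mathcomp Require Import all_boot all_order all_algebra.
From mathcomp Require Import all_classical all_reals all_analysis.
Set Implicit Arguments. Unset Strict Implicit. Unset Printing Implicit Defensive.
Import Order.TTheory GRing.Theory Num.Theory.
Local Open Scope classical_set_scope.
Local Open Scope ring_scope.

Section defs.
Context (d : measure_display) (T : measurableType d) (R : realType)
  (P : probability T R).

Definition atomless :=
  forall A : set T, measurable A -> (0 < P A)%E ->
    exists2 B : set T, measurable B /\ B `<=` A & (0 < P B)%E /\ (P B < P A)%E.

Definition expectation_welldef (V : T -> R) :=
  (\int[P]_x (Num.max (V x) 0)%:E < +oo)%E \/
  (\int[P]_x (Num.max (- V x) 0)%:E < +oo)%E.

Definition cx_le (U V : T -> R) :=
  forall u : R -> R, convex_function (E := R^o) setT u ->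
    expectation_welldef (u \o U) -> expectation_welldef (u \o V) ->
    (\int[P]_x (u (U x))%:E <= \int[P]_x (u (V x))%:E)%E.

Definition same_law (U V : T -> R) :=
  forall B : set R, measurable B -> P (U @^-1` B) = P (V @^-1` B).

Definition comonotonic (Z' W' : T -> R) :=
  exists S : T -> R, exists f g : R -> R,
    [/\ measurable_fun setT S,
        {homo f : x y / x <= y}, {homo g : x y / x <= y},
        {ae P, forall w, Z' w = f (S w)} &
        {ae P, forall w, W' w = g (S w)}].

Definition comonotonic_version (Z' W' Z W : T -> R) :=
  [/\ comonotonic Z' W', same_law Z' Z & same_law W' W].

End defs.

(* Main.v *)
Require Import Defs.
From HB Require Import structures.
From mathcomp Require Import all_boot all_order all_algebra.
From mathcomp Require Import all_classical all_reals all_analysis.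
From mathcomp Require Import ring lra.
From mathcomp Require Import measurable_realfun.
Set Implicit Arguments. Unset Strict Implicit. Unset Printing Implicit Defensive.
Import Order.TTheory GRing.Theory Num.Theory.
Local Open Scope classical_set_scope.
Local Open Scope ring_scope.
Section cvx.
Context (R : realType) (u : R -> R) (hu : convex_function (E := R^o) setT u).

Lemma cvx_ineq (x y l : R) : 0 <= l -> l <= 1 ->
  u (l * x + (1 - l) * y) <= l * u x + (1 - l) * u y.
Proof.
move=> l0 l1.
have := hu (Itv01 l0 l1) (x:=x) (y:=y).
by rewrite !inE /= => /(_ I I).
Qed.

Lemma chordC p q r : p < q -> q < r ->
  u q * (r - p) <= u p * (r - q) + u r * (q - p).
Proof.
move=> pq qr.
have rp : 0 < r - p by rewrite subr_gt0; apply: lt_trans qr.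
set l := (r - q) / (r - p).
have l0 : 0 <= l by rewrite divr_ge0 // ltW // subr_gt0.
have l1 : l <= 1 by rewrite ler_pdivrMr // mul1r lerD2l lerN2 ltW.
have hq : l * p + (1 - l) * r = q.
  rewrite /l; field; by rewrite subr_eq0 gt_eqF // (lt_trans pq qr).
have := cvx_ineq p r l0 l1; rewrite hq => h.
have h1 : 1 - l = (q - p) / (r - p).
  rewrite /l; field; by rewrite subr_eq0 gt_eqF // (lt_trans pq qr).
rewrite h1 /l in h.
rewrite -(ler_pM2r rp) in h.
apply: (le_trans h); rewrite le_eqVlt; apply/orP; left; apply/eqP.
by field; rewrite subr_eq0 gt_eqF // (lt_trans pq qr).
Qed.

Definition slope p q := (u q - u p) / (q - p).

Lemma slopeA p q r : p < q -> q < r -> slope p q <= slope q r.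
Proof.
move=> pq qr; have := chordC pq qr; rewrite /slope.
have h1 : 0 < q - p by rewrite subr_gt0.
have h2 : 0 < r - q by rewrite subr_gt0.
rewrite ler_pdivrMr // mulrAC ler_pdivlMr // => h.
nra.
Qed.

Lemma slopeB p q r : p < q -> q < r -> slope p r <= slope q r.
Proof.
move=> pq qr; have := chordC pq qr; rewrite /slope.
have h1 : 0 < r - p by rewrite subr_gt0; apply: lt_trans qr.
have h2 : 0 < r - q by rewrite subr_gt0.
rewrite ler_pdivrMr // mulrAC ler_pdivlMr // => h.
nra.
Qed.

Definition sgs k := [set y | exists2 p, p < k & y = slope p k].

Lemma sgs_ne k : sgs k !=set0.
Proof. by exists (slope (k - 1) k); exists (k - 1) => //; rewrite gtrBl. Qed.

Lemma sgs_ub k r : k < r -> ubound (sgs k) (slope k r).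
Proof. by move=> kr y [p pk ->]; apply: slopeA. Qed.

Definition sg k := sup (sgs k).

Lemma sgs_has k : has_sup (sgs k).
Proof. split; first exact: sgs_ne. by exists (slope k (k + 1)); apply: sgs_ub; rewrite ltrDl. Qed.

Lemma sg_ge p k : p < k -> slope p k <= sg k.
Proof. by move=> pk; apply: sup_upper_bound; [exact: sgs_has| exists p]. Qed.

Lemma sg_le k r : k < r -> sg k <= slope k r.
Proof. by move=> kr; apply: ge_sup; [exact: sgs_ne| exact: sgs_ub]. Qed.

Lemma tangent k t : u k + sg k * (t - k) <= u t.
Proof.
have [tk|kt|->] := ltgtP t k; last by rewrite subrr mulr0 addr0.
- have := sg_ge tk; rewrite /slope ler_pdivrMr ?subr_gt0 // => h.
  nra.
- have := sg_le kt; rewrite /slope ler_pdivlMr ?subr_gt0 // => h.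
  nra.
Qed.

Lemma tangent_approx t q : t < q -> q <= t + 1 ->
  u t - (slope (t + 1) (t + 2) - sg t) * (q - t) <= u q + sg q * (t - q).
Proof.
move=> tq qt1.
have h1 := tangent t q.
have h2 : sg q <= slope (t + 1) (t + 2).
  have q2 : q < t + 2 by apply: (le_lt_trans qt1); rewrite ltrD2l ltr1n.
  apply: (le_trans (sg_le q2)).
  have [qt1'|->] : q < t + 1 \/ q = t + 1.
    by move: qt1; rewrite le_eqVlt orbC => /orP [|/eqP]; [left|right].
  - by apply: slopeB => //; rewrite ltrD2l ltr1n.
  - by [].
nra.
Qed.

End cvx.
Section lines.
Context (R : realType).

Definition line (l : R * R) (t : R) := l.1 * t + l.2.
Definition mxl (x0 : R) (L : seq (R * R)) (t : R) :=
  foldr (fun l acc => Num.max (line l t) acc) x0 L.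
Definition Phi (L : seq (R * R)) t := mxl (line (head (0, 0) L) t) L t.

Lemma mxl_ge0 x0 L t : x0 <= mxl x0 L t.
Proof. by elim: L => //= l L IH; rewrite le_max IH orbT. Qed.

Lemma mxl_ge x0 L t l : l \in L -> line l t <= mxl x0 L t.
Proof.
elim: L => //= l' L IH; rewrite inE => /predU1P [->|/IH h].
  by rewrite le_max lexx.
by rewrite le_max h orbT.
Qed.

Lemma mxl_le x0 L t B : x0 <= B -> (forall l, l \in L -> line l t <= B) ->
  mxl x0 L t <= B.
Proof.
move=> x0B; elim: L => //= l L IH h; rewrite ge_max h ?mem_head //=.
by apply: IH => l' l'L; apply: h; rewrite inE l'L orbT.
Qed.

Lemma Phi_ge L t l : l \in L -> line l t <= Phi L t.
Proof. exact: mxl_ge. Qed.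

Lemma Phi_le L t B : L != [::] -> (forall l, l \in L -> line l t <= B) ->
  Phi L t <= B.
Proof.
case: L => // l L _ h; apply: mxl_le => //; first by apply: h; rewrite mem_head.
Qed.

Lemma Phi_eq L L' t : L != [::] -> L =i L' -> Phi L t = Phi L' t.
Proof.
move=> L0 LL'.
have L'0 : L' != [::].
  by case: L L0 LL' => // l L _ /(_ l); rewrite mem_head; case: L'.
apply/le_anti/andP; split; apply: Phi_le => // l lL; apply: Phi_ge.
  by rewrite -LL'.
by rewrite LL'.
Qed.

Lemma Phi_cons l L t : L != [::] -> Phi (l :: L) t = Num.max (line l t) (Phi L t).
Proof.
move=> L0; apply/le_anti/andP; split.
  apply: Phi_le => // l'; rewrite inE => /predU1P [->|l'L].
    by rewrite le_max lexx.
  by rewrite le_max Phi_ge ?orbT.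
by rewrite ge_max Phi_ge ?mem_head //=; apply: Phi_le => // l' l'L;
  apply: Phi_ge; rewrite inE l'L orbT.
Qed.

Lemma Phi_slope M a x x' : M != [::] -> (forall l, l \in M -> l.1 <= a) ->
  x <= x' -> Phi M x' - a * x' <= Phi M x - a * x.
Proof.
move=> M0 hM xx'.
suff : Phi M x' <= Phi M x + a * (x' - x) by move=> h; lra.
apply: Phi_le => // l lM.
have h1 := Phi_ge x lM.
have h2 : l.1 * (x' - x) <= a * (x' - x) by apply: ler_wpM2r; [lra|exact: hM].
rewrite /line in h1 *; lra.
Qed.

Lemma Phi_cvx L : L != [::] -> convex_function (E := R^o) setT (Phi L).
Proof.
move=> L0 t x y _ _ /=.
rewrite convRE.
apply: Phi_le => // l lL.
have h1 := Phi_ge x lL; have h2 := Phi_ge y lL.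
have t0 : 0 <= t%:num by [].
have t1 : t%:num <= 1 by [].
rewrite /line in h1 h2 *.
have -> : conv t x y = t%:num * x + (1 - t%:num) * y :> R by [].
have -> : unstable.onem t%:num = 1 - t%:num by [].
set tt := t%:num in t0 t1 *; nra.
Qed.

Lemma Phi_measurable L : measurable_fun setT (Phi L).
Proof.
rewrite /Phi.
have ml : forall l : R * R, measurable_fun setT (line l).
  move=> l; rewrite /line; apply: measurable_funD; last exact: measurable_cst.
  exact: measurable_funM.
suff : forall l0, measurable_fun setT (fun t => mxl (line l0 t) L t).
  by move=> /(_ (head (0, 0) L)).
move=> l0; elim: L => [|l L IH] /=; first exact: ml.
by apply: measurable_maxr.
Qed.

Definition comb (d : R * R * R) := (d.1.1, d.1.2 + d.2).
Definition p1 (d : R * R * R) := d.1.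
Definition p2 (d : R * R * R) := (d.1.1, d.2).

Lemma Phi_split (D : seq (R * R * R)) x y : D != [::] ->
  Phi (map comb D) (x + y) <= Phi (map p1 D) x + Phi (map p2 D) y.
Proof.
move=> D0; apply: Phi_le; first by case: D D0.
move=> l /mapP [dd dD ->].
have h1 := Phi_ge x (map_f p1 dD); have h2 := Phi_ge y (map_f p2 dD).
rewrite /line /comb /p1 /p2 /= in h1 h2 *; lra.
Qed.

Lemma max_slope (L : seq (R * R)) : L != [::] ->
  exists2 lm, lm \in L & forall l, l \in L -> l.1 <= lm.1.
Proof.
elim: L => // l L IH _.
have [->|L0] := eqVneq L [::].
  by exists l; rewrite ?mem_head // => l'; rewrite inE => /eqP ->.
have [lm lmL hm] := IH L0.
have [llm|lml] := leP l.1 lm.1.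
  exists lm; first by rewrite inE lmL orbT.
  by move=> l'; rewrite inE => /predU1P [->|/hm].
exists l; first by rewrite mem_head.
move=> l'; rewrite inE => /predU1P [->//|/hm h]; exact: (le_trans h (ltW lml)).
Qed.

End lines.
Arguments line {R}.
Arguments mxl {R}.
Arguments Phi {R}.
Arguments comb {R}.
Arguments p1 {R}.
Arguments p2 {R}.
Section DL.
Context (R : realType) (f g : R -> R).
Hypotheses (hf : {homo f : x y / x <= y}) (hg : {homo g : x y / x <= y}).

Lemma DL_step (L' : seq (R * R)) (D' : seq (R * R * R)) (a b : R) :
  L' != [::] -> D' != [::] -> map comb D' =i L' ->
  (forall l, l \in L' -> l.1 <= a) ->
  (forall s, Phi (map p1 D') (f s) + Phi (map p2 D') (g s) = Phi L' (f s + g s)) ->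
  exists beta : R, forall s,
    Phi (map p1 ((a, beta, b - beta) :: D')) (f s) +
    Phi (map p2 ((a, beta, b - beta) :: D')) (g s) =
    Num.max (line (a, b) (f s + g s)) (Phi L' (f s + g s)).
Proof.
move=> L'0 D'0 DL' hL' IH.
have m10 : map p1 D' != [::] by move: D'0; case: (D').
have m20 : map p2 D' != [::] by move: D'0; case: (D').
have s1 : forall l, l \in map p1 D' -> l.1 <= a.
  move=> l /mapP [dd dD ->]; have : comb dd \in L' by rewrite -DL' map_f.
  by move/hL'.
have s2 : forall l, l \in map p2 D' -> l.1 <= a.
  move=> l /mapP [dd dD ->]; have : comb dd \in L' by rewrite -DL' map_f.
  by move/hL'.
pose D1 s := Phi (map p1 D') (f s) - a * f s.
pose D2 s := Phi (map p2 D') (g s) - a * g s.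
have D1m : forall s s', s <= s' -> D1 s' <= D1 s.
  by move=> s s' ss'; apply: Phi_slope => //; apply: hf.
have D2m : forall s s', s <= s' -> D2 s' <= D2 s.
  by move=> s s' ss'; apply: Phi_slope => //; apply: hg.
pose LB := [set x | exists s, (D1 s + D2 s <= b /\ x = D1 s) \/
                              (b <= D1 s + D2 s /\ x = b - D2 s)].
have KL : forall x, LB x -> forall s',
    (D1 s' + D2 s' <= b -> x <= b - D2 s') /\ (b <= D1 s' + D2 s' -> x <= D1 s').
  move=> x [s [[hs ->]|[hs ->]]] s'; split => hs';
    have [ss'|s's] := leP s s'.
  - by have := D2m _ _ ss'; lra.
  - by have := D1m _ _ (ltW s's); lra.
  - by have := D1m _ _ ss'; have := D2m _ _ ss'; lra.
  - by have := D1m _ _ (ltW s's); lra.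
  - by have := D2m _ _ ss'; lra.
  - by have := D1m _ _ (ltW s's); have := D2m _ _ (ltW s's); lra.
  - by have := D2m _ _ ss'; lra.
  - by have := D1m _ _ (ltW s's); lra.
have LBne : LB !=set0.
  case: (leP (D1 0 + D2 0) b) => h.
    by exists (D1 0); exists 0; left.
  by exists (b - D2 0); exists 0; right; split => //; apply: ltW.
have LBub : exists y, ubound LB y.
  case: (leP (D1 0 + D2 0) b) => h.
    by exists (b - D2 0) => x /KL /(_ 0) [+ _]; apply.
  by exists (D1 0) => x /KL /(_ 0) [_]; apply; apply: ltW.
have hs : has_sup LB by split.
exists (sup LB) => s.
rewrite /= Phi_cons // Phi_cons //.
have IHs := IH s.
rewrite -IHs.
have [h|h] := leP (D1 s + D2 s) b.
- have e1 : D1 s <= sup LB by apply: sup_upper_bound => //; exists s; left.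
  have e2 : sup LB <= b - D2 s.
    by apply: ge_sup => // x /KL /(_ s) [+ _]; apply.
  rewrite /D1 /D2 /line /= in e1 e2 h *.
  rewrite (max_idPl _); last by lra.
  rewrite (max_idPl _); last by lra.
  rewrite (max_idPl _); last by lra.
  lra.
- have e1 : b - D2 s <= sup LB by apply: sup_upper_bound => //; exists s; right; split => //; apply: ltW.
  have e2 : sup LB <= D1 s.
    by apply: ge_sup => // x /KL /(_ s) [_]; apply; apply: ltW.
  rewrite /D1 /D2 /line /= in e1 e2 h *.
  rewrite (max_idPr _); last by lra.
  rewrite (max_idPr _); last by lra.
  rewrite (max_idPr _); last by lra.
  lra.
Qed.

Lemma DL n : forall L : seq (R * R), size L = n -> L != [::] ->
  exists D : seq (R * R * R), [/\ D != [::], map comb D =i L &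
    forall s, Phi (map p1 D) (f s) + Phi (map p2 D) (g s) = Phi L (f s + g s)].
Proof.
elim: n => [|n IHn] L sL L0; first by case: L sL L0.
have [lm lmL hm] := max_slope L0.
have pL := perm_to_rem lmL.
set L' := rem lm L in pL.
have memL : L =i lm :: L' by apply: perm_mem.
have [L'0|L'0] := eqVneq L' [::].
  exists [:: (lm.1, lm.2, 0)]; split => //.
    by move=> x; rewrite memL L'0 /comb /= addr0 -surjective_pairing.
  move=> s; rewrite (@Phi_eq _ L [:: lm]) //; last by rewrite -L'0.
  by rewrite /Phi /= !maxxx /line /p2 /=; lra.
have sL' : size L' = n by rewrite size_rem // sL.
have [D' [D'0 DL' IH]] := IHn L' sL' L'0.
have hL' : forall l, l \in L' -> l.1 <= lm.1.
  by move=> l lL'; apply: hm; rewrite memL inE lL' orbT.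
have [beta Hb] := DL_step lm.2 L'0 D'0 DL' hL' IH.
exists ((lm.1, beta, lm.2 - beta) :: D'); split => //.
  move=> x; rewrite memL /= inE DL'.
  by rewrite /comb /= addrC subrK -surjective_pairing.
by move=> s; rewrite Hb (@Phi_eq _ L (lm :: L')) // Phi_cons // -surjective_pairing.
Qed.

End DL.
Section prob.
Context (d : measure_display) (T : measurableType d) (R : realType)
  (P : probability T R).

Lemma mEFin (h : T -> R) : measurable_fun setT h ->
  measurable_fun setT (fun x => (h x)%:E).
Proof. by move=> mh; apply/measurable_EFinP. Qed.

Lemma mEFinc (k : R -> R) (h : T -> R) : measurable_fun setT k ->
  measurable_fun setT h -> measurable_fun setT (fun x => (k (h x))%:E).
Proof. by move=> mk mh; apply/measurable_EFinP; exact: measurableT_comp. Qed.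

Lemma law_int (U V : T -> R) (h : R -> R) :
  measurable_fun setT U -> measurable_fun setT V -> same_law P U V ->
  measurable_fun setT h -> (forall x, 0 <= h x) ->
  (\int[P]_x (h (U x))%:E = \int[P]_x (h (V x))%:E)%E.
Proof.
move=> mU mV hUV mh h0.
have mh' : measurable_fun setT (fun y => (h y)%:E) by apply/measurable_EFinP.
have := ge0_integral_pushforward mU P measurableT mh' (fun y _ => h0 y : (0 <= (h y)%:E)%E).
have := ge0_integral_pushforward mV P measurableT mh' (fun y _ => h0 y : (0 <= (h y)%:E)%E).
rewrite !preimage_setT /= => <- <-.
apply: eq_measure_integral => A mA _ /=.
by rewrite /pushforward hUV.
Qed.

Lemma Phi_cvx_sub (L : seq (R * R)) m : L != [::] ->
  convex_function (E := R^o) setT (fun x => Phi L x - m).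
Proof.
move=> L0 t x y _ _ /=.
rewrite convRE.
have : Phi L (conv t x y) <= t%:num * Phi L x + (1 - t%:num) * Phi L y.
  apply: Phi_le => // l lL.
  have h1 := Phi_ge x lL; have h2 := Phi_ge y lL.
  have t0 : 0 <= t%:num by [].
  have t1 : t%:num <= 1 by [].
  rewrite /line in h1 h2 *.
  have -> : conv t x y = t%:num * x + (1 - t%:num) * y :> R by [].
  set tt := t%:num in t0 t1 *; nra.
have -> : unstable.onem t%:num = 1 - t%:num by [].
move=> h; lra.
Qed.

Lemma wd_ge0 (V : T -> R) : (forall x, 0 <= V x) -> expectation_welldef P V.
Proof.
move=> h; right.
rewrite (eq_integral (fun _ => 0%E)); first by rewrite integral0.
by move=> x _; rewrite /= (max_idPr _) // oppr_le0.
Qed.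

Context (X Y Z W Zco Wco : T -> R).
Hypotheses (mX : measurable_fun setT X) (mY : measurable_fun setT Y)
  (mZ : measurable_fun setT Z) (mW : measurable_fun setT W)
  (mZco : measurable_fun setT Zco) (mWco : measurable_fun setT Wco).
Hypotheses (cxX : cx_le P X Z) (cxY : cx_le P Y W)
  (cv : comonotonic_version P Zco Wco Z W).

Lemma core (L : seq (R * R)) (c : R) : (0, c) \in L ->
  (\int[P]_x (Phi L (X x + Y x) - c)%:E <=
   \int[P]_x (Phi L (Zco x + Wco x) - c)%:E)%E.
Proof.
move=> cL.
have L0 : L != [::] by case: L cL.
case: cv => [[S [f [g [mS hf hg aeZ aeW]]]] lawZ lawW].
have [D [D0 DLD hD]] := DL hf hg (erefl (size L)) L0.
have : (0, c) \in map comb D by rewrite DLD.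
case/mapP => dd ddD hdd.
have e0 : dd.1.1 = 0 by move: hdd; rewrite /comb => -[].
have ec : dd.1.2 + dd.2 = c by move: hdd; rewrite /comb => -[].
set m1 := dd.1.2; set m2 := dd.2.
have LD : L =i map comb D by move=> z; rewrite DLD.
have D10 : map p1 D != [::] by move: D0; case: (D).
have D20 : map p2 D != [::] by move: D0; case: (D).
pose psi1 x := Phi (map p1 D) x - m1.
pose psi2 x := Phi (map p2 D) x - m2.
have psi10 : forall x, 0 <= psi1 x.
  move=> x; have := Phi_ge x (map_f p1 ddD).
  by rewrite /psi1 /line /p1 e0 mul0r add0r subr_ge0.
have psi20 : forall x, 0 <= psi2 x.
  move=> x; have := Phi_ge x (map_f p2 ddD).
  by rewrite /psi2 /line /p2 /= e0 mul0r add0r subr_ge0.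
have PhiL0 : forall t, 0 <= Phi L t - c.
  by move=> t; have := Phi_ge t cL; rewrite /line /= mul0r add0r subr_ge0.
have split : forall x y, Phi L (x + y) - c <= psi1 x + psi2 y.
  move=> x y; rewrite (Phi_eq _ L0 LD).
  have := Phi_split x y D0; rewrite /psi1 /psi2 -ec /m1 /m2; lra.
have mPhi := @Phi_measurable R.
have mpsi1 : measurable_fun setT psi1.
  by apply: measurable_funB => //; exact: measurable_cst.
have mpsi2 : measurable_fun setT psi2.
  by apply: measurable_funB => //; exact: measurable_cst.
have mPc : measurable_fun setT (fun t => Phi L t - c).
  by apply: measurable_funB => //; exact: measurable_cst.
have cv1 := Phi_cvx_sub m1 D10.
have cv2 := Phi_cvx_sub m2 D20.
apply: (@le_trans _ _ (\int[P]_x ((psi1 (X x))%:E + (psi2 (Y x))%:E))%E).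
  apply: ge0_le_integral => //.
  - by move=> x _; rewrite lee_fin.
  - by apply: (mEFinc (k := fun t => Phi L t - c) (h := X \+ Y)) => //; exact: measurable_funD.
  - by apply: emeasurable_funD; [apply: (mEFinc (k := psi1))|apply: (mEFinc (k := psi2))].
  - by move=> x _; rewrite -EFinD lee_fin.
rewrite ge0_integralD //; first last.
- by apply: mEFinc.
- by move=> x _; rewrite lee_fin.
- by apply: mEFinc.
- by move=> x _; rewrite lee_fin.
apply: (@le_trans _ _ (\int[P]_x (psi1 (Zco x))%:E + \int[P]_x (psi2 (Wco x))%:E)%E).
  rewrite (@law_int Zco Z psi1) // (@law_int Wco W psi2) //.
  apply: leeD.
  - exact: (cxX cv1 (wd_ge0 (fun x => psi10 (X x))) (wd_ge0 (fun x => psi10 (Z x)))).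
  - exact: (cxY cv2 (wd_ge0 (fun x => psi20 (Y x))) (wd_ge0 (fun x => psi20 (W x)))).
rewrite -ge0_integralD //; first last.
- by apply: mEFinc.
- by move=> x _; rewrite lee_fin.
- by apply: mEFinc.
- by move=> x _; rewrite lee_fin.
rewrite le_eqVlt; apply/orP; left; apply/eqP.
apply: ae_eq_integral => //.
- by apply: emeasurable_funD; [apply: (mEFinc (k := psi1))|apply: (mEFinc (k := psi2))].
- by apply: (mEFinc (k := fun t => Phi L t - c) (h := Zco \+ Wco)) => //; exact: measurable_funD.
apply: filterS2 aeZ aeW => x hZ hW _.
rewrite -EFinD hZ hW; congr (_%:E).
rewrite -hD /psi1 /psi2 -ec /m1 /m2; lra.
Qed.

End prob.
Section approx.
Context (R : realType) (u : R -> R) (hu : convex_function (E := R^o) setT u).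

Definition tl (k : R) : R * R := (sg u k, u k - sg u k * k).

Lemma tl_le k t : line (tl k) t <= u t.
Proof. by have := tangent hu k t; rewrite /line /tl /=; lra. Qed.

Definition qs (n : nat) : seq R := map ratr (pmap (@unpickle rat) (iota 0 n)).
Definition Ln (n : nat) := map tl (qs n).
Definition A (l0 : R * R) (n : nat) (t : R) := Phi (l0 :: Ln n) t.

Lemma A_le l0 n t : A l0 n t <= Num.max (line l0 t) (u t).
Proof.
apply: Phi_le => // l; rewrite inE => /predU1P [->|/mapP [k _ ->]].
  by rewrite le_max lexx.
by rewrite le_max tl_le orbT.
Qed.

Lemma A_ge l0 n t : line l0 t <= A l0 n t.
Proof. by apply: Phi_ge; rewrite mem_head. Qed.

Lemma qs_sub n m : (n <= m)%N -> {subset qs n <= qs m}.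
Proof.
move=> nm x /mapP [q]; rewrite !mem_pmap => /mapP [i]; rewrite !mem_iota /= => hi hq ->.
apply: map_f; rewrite mem_pmap; apply/mapP; exists i => //.
by rewrite mem_iota /=; apply: leq_trans nm.
Qed.

Lemma A_mono l0 t : {homo (fun n => A l0 n t) : n m / (n <= m)%N >-> n <= m}.
Proof.
move=> n m nm; apply: Phi_le => // l lL; apply: Phi_ge.
move: lL; rewrite !inE => /predU1P [->|]; first by rewrite eqxx.
by move=> /mapP [k kq ->]; rewrite map_f ?orbT // (qs_sub nm).
Qed.

Lemma A_approx l0 t eps : 0 < eps -> exists N, u t - eps <= A l0 N t.
Proof.
move=> e0.
set K := slope u (t + 1) (t + 2) - sg u t.
set del := Num.min 1 (eps / (`|K| + 1)).
have Kp : 0 < `|K| + 1 by rewrite ltr_pwDr.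
have d0 : 0 < del by rewrite lt_min ltr01 /= divr_gt0.
have [q] : exists q : rat, ratr q \in `]t, t + del[ by apply: rat_in_itvoo; rewrite ltrDl.
rewrite in_itv /= => /andP [tq qt].
exists (pickle q).+1.
have hq : ratr q \in qs (pickle q).+1.
  apply: map_f; rewrite mem_pmap; apply/mapP; exists (pickle q); last by rewrite pickleK.
  by rewrite mem_iota /= add0n ltnSn.
have h1 : line (tl (ratr q)) t <= A l0 (pickle q).+1 t.
  by apply: Phi_ge; rewrite inE map_f ?orbT.
have d1 : del <= 1 by rewrite ge_min lexx.
have d2 : del <= eps / (`|K| + 1) by rewrite ge_min lexx orbT.
have d3 : del * (`|K| + 1) <= eps by rewrite -ler_pdivlMr.
have qt1 : ratr q <= t + 1 by apply: ltW; apply: (lt_le_trans qt); rewrite lerD2l.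
have h2 := tangent_approx hu tq qt1.
apply: le_trans h1; rewrite /line /tl /=.
have hK : K <= `|K| by exact: ler_norm.
have hK' : - `|K| <= K by rewrite lerNl; rewrite -normrN; exact: ler_norm.
rewrite -/K in h2.
have hqt : 0 <= ratr q - t by rewrite subr_ge0 ltW.
have hqt2 : ratr q - t <= del by lra.
nra.
Qed.

Lemma A_cvg l0 t : (fun n => A l0 n t) @ \oo --> Num.max (line l0 t) (u t).
Proof.
apply/cvgrPdist_le => eps e0.
have [N hN] := A_approx l0 t e0.
exists N => // n /= Nn.
have h1 := A_le l0 n t.
have h2 := A_mono l0 t Nn.
have h3 := A_ge l0 n t.
rewrite ger0_norm ?subr_ge0 //.
have [hm|hm] := leP (line l0 t) (u t).
  rewrite (max_idPr hm) in h1 *; lra.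
have e : Num.max (line l0 t) (u t) = line l0 t by apply/max_idPl; exact: ltW.
rewrite e in h1 *; lra.
Qed.

Lemma u_measurable : measurable_fun setT u.
Proof.
apply: (@measurable_fun_cvg _ _ _ _ (fun n => A (tl 0) n)).
  by move=> m; apply: Phi_measurable.
move=> t _.
have := A_cvg (l0 := tl 0) (t := t).
by rewrite (max_idPr (tl_le 0 t)).
Qed.

End approx.
Section arith.
Context (R : realType).
Local Open Scope ereal_scope.

Lemma fin_ex (x : \bar R) : x \is a fin_num -> exists r : R, x = r%:E.
Proof. by move=> xf; exists (fine x); rewrite fineK. Qed.

Lemma arith (pa na pb nb : \bar R) (qa qb : nat -> \bar R) :
  0 <= pa -> 0 <= na -> 0 <= pb -> 0 <= nb ->
  (pb < +oo \/ nb < +oo) ->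
  (forall n, 0 <= qa n /\ qa n <= n%:R%:E) ->
  (forall n, 0 <= qb n /\ qb n <= n%:R%:E) ->
  (forall n, qa n <= na) ->
  (forall n, pa + (n%:R%:E - qa n) <= pb + (n%:R%:E - qb n)) ->
  qb @ \oo --> nb ->
  pa - na <= pb - nb.
Proof.
move=> pa0 na0 pb0 nb0 wd hqa hqb qana H cv.
have [pbinf|pblt] : pb = +oo \/ pb < +oo.
  by have := leey pb; rewrite le_eqVlt => /orP [/eqP ->|h]; [left|right].
  have nblt : nb < +oo by case: wd => //; rewrite pbinf ltxx.
  have nbf : nb \is a fin_num by rewrite ge0_fin_numE.
  by have [r ->] := fin_ex nbf; rewrite pbinf addye ?leey.
have pbf : pb \is a fin_num by rewrite ge0_fin_numE.
have paf : pa \is a fin_num.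
  rewrite ge0_fin_numE //.
  have [qa0 qa1] := hqa 0%N; have [qb0 qb1] := hqb 0%N.
  have := H 0%N.
  have [ra ->] : exists r : R, qa 0%N = r%:E.
    by apply: fin_ex; rewrite ge0_fin_numE // (le_lt_trans qa1) // ltry.
  have [rb ->] : exists r : R, qb 0%N = r%:E.
    by apply: fin_ex; rewrite ge0_fin_numE // (le_lt_trans qb1) // ltry.
  have [rpb ->] := fin_ex pbf.
  move=> h; rewrite ltey; apply/negP => /eqP pinf.
  by move: h; rewrite pinf -!EFinB -EFinD addye // leye_eq.
have [nainf|nalt] : na = +oo \/ na < +oo.
  by have := leey na; rewrite le_eqVlt => /orP [/eqP ->|h]; [left|right].
  by rewrite nainf; have [r ->] := fin_ex paf; rewrite -[(- +oo)%E]/(-oo) addeNy leNye.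
have naf : na \is a fin_num by rewrite ge0_fin_numE.
have [rpa epa] := fin_ex paf; have [rna ena] := fin_ex naf; have [rpb epb] := fin_ex pbf.
have C : forall n, qb n <= (rpb - (rpa - rna))%:E.
  move=> n; have [qa0 qa1] := hqa n; have [qb0 qb1] := hqb n.
  have := H n; have := qana n.
  have [ra era] : exists r : R, qa n = r%:E.
    by apply: fin_ex; rewrite ge0_fin_numE // (le_lt_trans qa1) // ltry.
  have [rb erb] : exists r : R, qb n = r%:E.
    by apply: fin_ex; rewrite ge0_fin_numE // (le_lt_trans qb1) // ltry.
  rewrite era erb epa ena epb -!EFinB -!EFinD !lee_fin; lra.
have nbC : nb <= (rpb - (rpa - rna))%:E.
  rewrite -(cvg_lim (@ereal_hausdorff R) cv).
  apply: lime_le; first by apply/cvg_ex; exists nb.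
  by apply: nearW => n; exact: C.
have nbf : nb \is a fin_num by rewrite ge0_fin_numE // (le_lt_trans nbC) // ltry.
have [rnb enb] := fin_ex nbf.
move: nbC; rewrite epa ena epb enb -!EFinB !lee_fin; lra.
Qed.
End arith.
Section final.
Context (d : measure_display) (T : measurableType d) (R : realType)
  (P : probability T R).

Definition posf (h : T -> R) x := (Num.max (h x) 0)%:E.
Definition negf (h : T -> R) x := (Num.max (- h x) 0)%:E.
Definition qnf (h : T -> R) (n : nat) x := (Num.min (Num.max (- h x) 0) n%:R)%:E.

Lemma int_split (h : T -> R) :
  (\int[P]_x (h x)%:E = \int[P]_x posf h x - \int[P]_x negf h x)%E.
Proof.
have e1 : ((fun x => (h x)%:E)^\+)%E = posf h.
  by apply/funext => x; rewrite /posf EFin_max funeposE.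
have e2 : ((fun x => (h x)%:E)^\-)%E = negf h.
  by apply/funext => x; rewrite /negf EFin_max funenegE.
by rewrite integralE e1 e2.
Qed.

Lemma pw_shift (y : R) (n : nat) :
  Num.max y (- n%:R) + n%:R =
  Num.max y 0 + (n%:R - Num.min (Num.max (- y) 0) n%:R).
Proof.
have n0 : 0 <= n%:R :> R by [].
have [y0|y0] := leP 0 y.
  have e : Num.max y (- n%:R) = y by apply/max_idPl; lra.
  rewrite ?e {e}.
  have e : Num.max y 0 = y by apply/max_idPl; lra.
  rewrite ?e {e}.
  have e : Num.max (- y) 0 = 0 by apply/max_idPr; lra.
  rewrite ?e {e}.
  have e : Num.min 0 n%:R = 0 :> R by apply/min_idPl; lra.
  rewrite ?e {e}.
  lra.
have e : Num.max y 0 = 0 by apply/max_idPr; lra.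
  rewrite ?e {e}.
have e : Num.max (- y) 0 = - y by apply/max_idPl; lra.
  rewrite ?e {e}.
have [yn|yn] := leP (- n%:R) y.
  have e : Num.max y (- n%:R) = y by apply/max_idPl; lra.
  rewrite ?e {e}.
  have e : Num.min (- y) n%:R = - y by apply/min_idPl; lra.
  rewrite ?e {e}.
  lra.
have e : Num.max y (- n%:R) = - n%:R by apply/max_idPr; lra.
  rewrite ?e {e}.
have e : Num.min (- y) n%:R = n%:R by apply/min_idPr; lra.
  rewrite ?e {e}.
lra.
Qed.

Lemma mEF (h : T -> R) : measurable_fun setT h ->
  measurable_fun setT (fun x => (h x)%:E).
Proof. by move=> mh; apply/measurable_EFinP. Qed.

Lemma int_shift (h : T -> R) (mh : measurable_fun setT h) (n : nat) :
  [/\ (\int[P]_x (Num.max (h x) (- n%:R) + n%:R)%:E =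
       \int[P]_x posf h x + (n%:R%:E - \int[P]_x qnf h n x))%E,
      (0 <= \int[P]_x qnf h n x)%E & (\int[P]_x qnf h n x <= n%:R%:E)%E].
Proof.
have n0 : 0 <= n%:R :> R by [].
have mq : measurable_fun setT (qnf h n).
  apply: mEF; apply: measurable_minr; last exact: measurable_cst.
  apply: measurable_maxr; last exact: measurable_cst.
  exact: measurable_funN.
have mp : measurable_fun setT (posf h).
  by apply: mEF; apply: measurable_maxr => //; exact: measurable_cst.
have q0 : forall x, (0 <= qnf h n x)%E.
  by move=> x; rewrite lee_fin le_min le_max lexx orbT /= ?ler0n.
have qn : forall x, (qnf h n x <= n%:R%:E)%E.
  by move=> x; rewrite lee_fin ge_min lexx orbT.
have Iq0 : (0 <= \int[P]_x qnf h n x)%E by apply: integral_ge0 => x _.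
have Iqn : (\int[P]_x qnf h n x <= n%:R%:E)%E.
  apply: (@le_trans _ _ (\int[P]_x (cst n%:R%:E) x)%E).
    by apply: ge0_le_integral.
  by rewrite integral_cst // -[X in (_ * X)%E]/(P setT) probability_setT mule1.
have mr : measurable_fun setT (fun x => (n%:R - Num.min (Num.max (- h x) 0) n%:R)%:E).
  apply: mEF; apply: measurable_funB; first exact: measurable_cst.
  apply: measurable_minr; last exact: measurable_cst.
  apply: measurable_maxr; last exact: measurable_cst.
  exact: measurable_funN.
have r0 : forall x, (0 <= (n%:R - Num.min (Num.max (- h x) 0) n%:R)%:E)%E.
  by move=> x; rewrite lee_fin subr_ge0 ge_min lexx orbT.
have p0 : forall x, setT x -> (0 <= posf h x)%E.
  by move=> x _; rewrite lee_fin le_max lexx orbT.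
have r0' : forall x, setT x -> (0 <= (n%:R - Num.min (Num.max (- h x) 0) n%:R)%:E)%E.
  by move=> x _; exact: r0.
have q0' : forall x, setT x -> (0 <= qnf h n x)%E by move=> x _; exact: q0.
split => //.
rewrite (eq_integral (fun x => posf h x + (n%:R - Num.min (Num.max (- h x) 0) n%:R)%:E)%E); last first.
  by move=> x _; rewrite pw_shift EFinD.
rewrite ge0_integralD //.
congr (_ + _)%E.
have : (\int[P]_x ((n%:R - Num.min (Num.max (- h x) 0) n%:R)%:E + qnf h n x) =
        n%:R%:E)%E.
  rewrite (eq_integral (fun _ => n%:R%:E)); last first.
    by move=> x _; rewrite /qnf -EFinD subrK.
  by rewrite integral_cst // -[X in (_ * X)%E]/(P setT) probability_setT mule1.
rewrite ge0_integralD //.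
have qf : (\int[P]_x qnf h n x)%E \is a fin_num.
  by rewrite ge0_fin_numE // (le_lt_trans Iqn) // ltry.
by move=> <-; rewrite addeK.
Qed.


Lemma qn_cvg (b : T -> R) : measurable_fun setT b ->
  (fun n => \int[P]_x qnf b n x)%E @ \oo --> (\int[P]_x negf b x)%E.
Proof.
move=> mb.
have mq : forall n, measurable_fun setT (qnf b n).
  move=> n; apply: mEF; apply: measurable_minr; last exact: measurable_cst.
  apply: measurable_maxr; last exact: measurable_cst.
  exact: measurable_funN.
have q0 : forall n x, setT x -> (0 <= qnf b n x)%E.
  by move=> n x _; rewrite lee_fin le_min le_max lexx orbT /= ?ler0n.
have mono : forall x, setT x -> {homo (fun n => qnf b n x) : n m / (n <= m)%N >-> (n <= m)%E}.
  move=> x _ n m nm; rewrite /qnf lee_fin le_min; apply/andP; split.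
    by rewrite ge_min lexx.
  by rewrite ge_min; apply/orP; right; rewrite ler_nat.
have := cvg_monotone_convergence (mu := P) measurableT mq q0 mono.
suff -> : (\int[P]_x limn ((qnf b)^~ x))%E = (\int[P]_x negf b x)%E by [].
apply: eq_integral => x _; apply: (cvg_lim (@ereal_hausdorff R)).
apply: cvg_near_cst.
have := nbhs_infty_ger (Num.max (- b x) 0); apply: filterS => n hn.
by rewrite /qnf /negf; congr EFin; apply/min_idPl.
Qed.

Lemma final_step (a b : T -> R) : measurable_fun setT a -> measurable_fun setT b ->
  expectation_welldef P b ->
  (forall n : nat, (\int[P]_x (Num.max (a x) (- n%:R) + n%:R)%:E <=
                    \int[P]_x (Num.max (b x) (- n%:R) + n%:R)%:E)%E) ->
  (\int[P]_x (a x)%:E <= \int[P]_x (b x)%:E)%E.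
Proof.
move=> ma mb wdb H.
rewrite (int_split a) (int_split b).
have Pa0 : (0 <= \int[P]_x posf a x)%E by apply: integral_ge0 => x _; rewrite lee_fin le_max lexx orbT.
have Na0 : (0 <= \int[P]_x negf a x)%E by apply: integral_ge0 => x _; rewrite lee_fin le_max lexx orbT.
have Pb0 : (0 <= \int[P]_x posf b x)%E by apply: integral_ge0 => x _; rewrite lee_fin le_max lexx orbT.
have Nb0 : (0 <= \int[P]_x negf b x)%E by apply: integral_ge0 => x _; rewrite lee_fin le_max lexx orbT.
have QN : forall (h : T -> R) n, measurable_fun setT h ->
    (\int[P]_x qnf h n x <= \int[P]_x negf h x)%E.
  move=> h n mh; apply: ge0_le_integral => //.
  - by move=> x _; rewrite lee_fin le_min le_max lexx orbT /= ?ler0n.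
  - apply: mEF; apply: measurable_minr; last exact: measurable_cst.
    apply: measurable_maxr; last exact: measurable_cst.
    exact: measurable_funN.
  - apply: mEF; apply: measurable_maxr; last exact: measurable_cst.
    exact: measurable_funN.
  - by move=> x _; rewrite lee_fin ge_min lexx.
move: (H) => H'.
have Hn : forall n, (\int[P]_x posf a x + ((n%:R)%:E - \int[P]_x qnf a n x) <=
                     \int[P]_x posf b x + ((n%:R)%:E - \int[P]_x qnf b n x))%E.
  move=> n; have [<- _ _] := int_shift ma n; have [<- _ _] := int_shift mb n.
  exact: H.
apply: (@arith R _ _ _ _ (fun n => \int[P]_x qnf a n x)%E (fun n => \int[P]_x qnf b n x)%E) => //.
- by move=> n; have [_ ? ?] := int_shift ma n.
- by move=> n; have [_ ? ?] := int_shift mb n.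
- by move=> n; exact: QN.
- exact: qn_cvg.
Qed.

End final.
Section step1.
Context (d : measure_display) (T : measurableType d) (R : realType)
  (P : probability T R).
Context (X Y Z W Zco Wco : T -> R).
Hypotheses (mX : measurable_fun setT X) (mY : measurable_fun setT Y)
  (mZ : measurable_fun setT Z) (mW : measurable_fun setT W)
  (mZco : measurable_fun setT Zco) (mWco : measurable_fun setT Wco).
Hypotheses (cxX : cx_le P X Z) (cxY : cx_le P Y W)
  (cv : comonotonic_version P Zco Wco Z W).

Lemma step1 (u : R -> R) (hu : convex_function (E := R^o) setT u) (c : R) :
  (\int[P]_x (Num.max (u (X x + Y x)) c - c)%:E <=
   \int[P]_x (Num.max (u (Zco x + Wco x)) c - c)%:E)%E.
Proof.
have mu := u_measurable hu.
pose l0 := (0, c) : R * R.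
have lc : forall t, line l0 t = c by move=> t; rewrite /line /= mul0r add0r.
have mUV : forall (U V : T -> R), measurable_fun setT U -> measurable_fun setT V ->
  forall n, measurable_fun setT (fun x => (A u l0 n (U x + V x) - c)%:E).
  move=> U V mU mV n.
  apply: (mEFinc (k := fun t => A u l0 n t - c) (h := U \+ V)).
    by apply: measurable_funB; [exact: Phi_measurable|exact: measurable_cst].
  exact: measurable_funD.
have F0 : forall (U V : T -> R) n x, setT x -> (0 <= (A u l0 n (U x + V x) - c)%:E)%E.
  by move=> U V n x _; rewrite lee_fin subr_ge0 -{1}(lc (U x + V x)) A_ge.
have Fm : forall (U V : T -> R) x, setT x ->
    {homo (fun n => (A u l0 n (U x + V x) - c)%:E) : n m / (n <= m)%N >-> (n <= m)%E}.
  by move=> U V x _ n m nm; rewrite lee_fin lerD2r A_mono.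
have HM := @monotone_convergence _ _ _ P setT measurableT _ (mUV X Y mX mY) (F0 X Y) (Fm X Y).
have lim : forall x, limn (fun n => (A u l0 n (X x + Y x) - c)%:E) =
    (Num.max (u (X x + Y x)) c - c)%:E.
  move=> x; apply: (cvg_lim (@ereal_hausdorff R)).
  apply: cvg_EFin; first by apply: nearW.
  apply: cvgB; last exact: cvg_cst.
  have := A_cvg hu (l0 := l0) (t := X x + Y x); rewrite lc maxC.
  by [].
rewrite (eq_integral (fun x => limn (fun n => (A u l0 n (X x + Y x) - c)%:E))); last first.
  by move=> x _; rewrite lim.
rewrite HM.
apply: lime_le.
  apply: ereal_nondecreasing_is_cvgn => n m nm.
  apply: ge0_le_integral => //; [exact: F0|exact: mUV|exact: mUV|].
  by move=> x _; apply: Fm.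
apply: nearW => n.
apply: (le_trans (core mX mY mZ mW mZco mWco cxX cxY cv (mem_head l0 (Ln u n)))).
apply: ge0_le_integral => //.
- exact: F0.
- exact: mUV.
- apply: (mEFinc (k := fun t => Num.max (u t) c - c) (h := Zco \+ Wco)).
    apply: measurable_funB; last exact: measurable_cst.
    by apply: measurable_maxr => //; exact: measurable_cst.
  exact: measurable_funD.
- move=> x _; rewrite lee_fin lerD2r.
  by have := A_le hu l0 n (Zco x + Wco x); rewrite lc maxC.
Qed.
End step1.

Local Close Scope classical_set_scope.
Unset Implicit Arguments.

Theorem theorem4 (d : measure_display) (T : measurableType d) (R : realType)
  (P : probability T R) (X Y Z W Zco Wco : T -> R) :
  atomless P ->
  measurable_fun setT X -> measurable_fun setT Y ->
  measurable_fun setT Z -> measurable_fun setT W ->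
  measurable_fun setT Zco -> measurable_fun setT Wco ->
  cx_le P X Z -> cx_le P Y W ->
  comonotonic_version P Zco Wco Z W ->
  cx_le P (X \+ Y) (Zco \+ Wco).
Proof.
move=> _ mX mY mZ mW mZco mWco cxX cxY cv u hu wdU wdV.
have mu := u_measurable hu.
apply: (@final_step _ _ _ P (fun x => u ((X \+ Y) x)) (fun x => u ((Zco \+ Wco) x))).
- by apply: measurableT_comp => //; exact: measurable_funD.
- by apply: measurableT_comp => //; exact: measurable_funD.
- exact: wdV.
move=> n.
have := step1 mX mY mZ mW mZco mWco cxX cxY cv hu (- n%:R).
by rewrite opprK.
Qed.
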